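(* Let $V=(\mathbb F_2)^n$ with $n=bs$, decomposed into bricks $V=V_1\oplus\cdots\oplus V_b$, $\dim V_j=s$. Let $r\ge2$ and $\rho_1,\dots,\rho_r\in\mathrm{Sym}(V)$, and let $\Phi$ be the $r$-round Feistel network whose $i$-th round applies the Feistel operator $\bar\rho_i$. Assume that for every $1\le i\le r$, $0\rho_i=0$ and $\rho_i=\gamma_i\lambda_i$, where \begin{enumerate} \item[a)] $\gamma_i$ is a parallel map whose S-boxes are $2^\delta$-differentially uniform and strongly $(\delta-1)$-anti-invariant, for some $\delta<s$; \item[b)] $\lambda_i$ is a linear strongly proper diffusion layer. \end{enumerate} Suppose there exists a sequence of $r+1$ non-trivial linear partitions $\mathcal L(\mathcal U_1),\dots,\mathcal L(\mathcal U_{r+1})$ of $V\times V$, where each $\mathcal U_i$ is a proper non-trivial subgroup of $V\times V$ and $\mathcal L(\mathcal U_i)\bar\rho_i=\mathcal L(\mathcal U_{i+1})$ for all $1\le i\le r$. For each $i$ let $A_i=\{a\in V\mid (a,c)\in\mathcal U_i\text{ for some }c\in V\}$ and $D_i=\{d\in V\mid (0,d)\in\mathcal U_i\}$. Then none of the following conditions holds: \begin{enumerate} \item there exists $1\le i\le r-1$ such that $\mathcal L(\mathcal U_{i+1})\bar\rho_{i+1}=\mathcal L(\mathcal U_i)$; \item there exists $1\le i\le r-1$ such that $\mathcal U_i=A_i\times D_i$, $\mathcal U_{i+1}=A_{i+1}\times D_{i+1}$ and $\mathcal U_{i+2}=A_{i+2}\times D_{i+2}$; \item there exists $1\le i\le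 r$ such that $D_i=\{0\}$ and $D_{i+1}=\{0\}$; \item there exists $1\le i\le r$ such that $A_i=\{0\}$ and $A_{i+1}=\{0\}$. \end{enumerate}
   Context: Maps act on the right and are composed left to right ($\gamma\lambda$ means first $\gamma$, then $\lambda$); $+$ is bitwise XOR. The Feistel operator induced by $\rho\in\mathrm{Sym}(V)$ is $\bar\rho:V\times V\to V\times V$, $(x_1,x_2)\bar\rho=(x_2,\ x_1+x_2\rho)$. A wall is a subspace $\bigoplus_{j\in I}V_j$ with $\emptyset\ne I\subsetneq\{1,\dots,b\}$. A parallel map is $\gamma\in\mathrm{Sym}(V)$ acting brickwise, $\gamma=(\gamma^{(1)},\dots,\gamma^{(b)})$ with $\gamma^{(j)}\in\mathrm{Sym}(V_j)$ (its S-boxes, viewed as permutations of $(\mathbb F_2)^s$). A linear $\lambda\in\mathrm{GL}(V)$ is a strongly proper diffusion layer if there are no walls $W,W'$ with $W\lambda=W'$. For $f\in\mathrm{Sym}((\mathbb F_2)^s)$ and $a,c\in(\mathbb F_2)^s$ let $\delta_f(a,c)=|\{x\mid xf+(x+a)f=c\}|$; $f$ is $d$-differentially uniform if $d=\max_{a\ne0,\,c}\delta_f(a,c)$. For $1\le\epsilon<s$, $f$ with $0f=0$ is strongly $\epsilon$-anti-invariant if for all proper non-trivial subspaces $U,W$ of $(\mathbb F_2)^s$, $Uf=W$ implies $\dim U=\dim W<s-\epsilon$. For a subgroup $\mathcal U$ of $V\times V$, $\mathcal L(\mathcal U)=\{\mathcal U+v\mid v\in V\times V\}$ (non-trivial if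 neither the partition into singletons nor $\{V\times V\}$), and $\mathcal A f=\{Af\mid A\in\mathcal A\}$ for a partition $\mathcal A$. *)

(* Defs.v *)
From HB Require Import structures.
From mathcomp Require Import all_boot all_order all_algebra all_fingroup.
Set Implicit Arguments. Unset Strict Implicit. Unset Printing Implicit Defensive.
Import GRing.Theory.
Local Open Scope ring_scope.

Notation bits s := ('rV['F_2]_s).

(* V = (F_2)^(b*s), represented as b x s matrices: row j is the brick V_j. *)
Notation VV b s := ('M['F_2]_(b, s)).

Definition wall (b s : nat) (I : {set 'I_b}) : {set VV b s} :=
  [set x : VV b s | [forall j, (j \notin I) ==> (row j x == 0)]].

Definition is_wall_index (b : nat) (I : {set 'I_b}) : Prop :=
  I != set0 /\ I != [set: 'I_b].

Definition parallel_with (b s : nat) (g : {perm VV b s}) (S : 'I_b -> {perm bits s}) : Prop :=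
  forall (x : VV b s) (j : 'I_b), row j (g x) = S j (row j x).

(* linear over F_2 (i.e. additive) *)
Definition lin_map (b s : nat) (l : {perm VV b s}) : Prop :=
  forall x y : VV b s, l (x + y) = l x + l y.

Definition strongly_proper (b s : nat) (l : {perm VV b s}) : Prop :=
  lin_map l /\
  ~ (exists I I' : {set 'I_b}, is_wall_index I /\ is_wall_index I' /\
        [set l x | x in wall s I] = wall s I').

Definition ddt (s : nat) (f : {perm bits s}) (a c : bits s) : nat :=
  #|[set x : bits s | f x + f (x + a) == c]|.

Definition diff_uniform (s : nat) (f : {perm bits s}) (d : nat) : Prop :=
  (exists a c : bits s, a != 0 /\ ddt f a c = d) /\
  (forall a c : bits s, a != 0 -> (ddt f a c <= d)%N).

Definition strongly_anti_invariant (s eps : nat) (f : {perm bits s}) : Prop :=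
  (1 <= eps < s)%N /\ f 0 = 0 /\
  forall U W : {vspace bits s},
    U != 0%VS -> U != fullv -> W != 0%VS -> W != fullv ->
    [set f x | x in [set y : bits s | y \in U]] = [set y : bits s | y \in W] ->
    \dim U = \dim W /\ (\dim U < s - eps)%N.

Definition feistel (b s : nat) (rho : {perm VV b s}) (x : VV b s * VV b s)
  : VV b s * VV b s := (x.2, x.1 + rho x.2).

Definition is_subgroup (b s : nat) (U : {set VV b s * VV b s}) : Prop :=
  (0, 0) \in U /\ forall u v, u \in U -> v \in U -> (u.1 + v.1, u.2 + v.2) \in U.

Definition proper_nontrivial (b s : nat) (U : {set VV b s * VV b s}) : Prop :=
  U != [set (0, 0)] /\ U != [set: VV b s * VV b s].

Definition lin_partition (b s : nat) (U : {set VV b s * VV b s})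
  : {set {set VV b s * VV b s}} :=
  [set [set (u.1 + v.1, u.2 + v.2) | u in U] | v : VV b s * VV b s].

Definition part_image (T : finType) (P : {set {set T}}) (f : T -> T) : {set {set T}} :=
  [set [set f x | x in A] | A : {set T} in P].

Definition Aset (b s : nat) (U : {set VV b s * VV b s}) : {set VV b s} :=
  [set a : VV b s | [exists c : VV b s, (a, c) \in U]].

Definition Dset (b s : nat) (U : {set VV b s * VV b s}) : {set VV b s} :=
  [set d : VV b s | (0, d) \in U].

(* Main.v *)
Require Import Defs.
From HB Require Import structures.
From mathcomp Require Import all_boot all_order all_algebra all_fingroup all_field.
From mathcomp Require Import zify.
Set Implicit Arguments. Unset Strict Implicit. Unset Printing Implicit Defensive.
Local Open Scope ring_scope.
Import GRing.Theory.

Lemma F2c (c : 'F_2) : c = 0 \/ c = 1.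
Proof. case: c => [[|[|n]]] H; [left|right|]; try exact: val_inj. by []. Qed.
Lemma F2xx (c : 'F_2) : c + c = 0.
Proof. have [->|->] := F2c c. by rewrite addr0. by apply/val_inj. Qed.
Lemma mxxx m n (x : 'M['F_2]_(m,n)) : x + x = 0.
Proof. by apply/matrixP => i j; rewrite !mxE F2xx. Qed.
Lemma mxKx m n (x y : 'M['F_2]_(m,n)) : x + (x + y) = y.
Proof. by rewrite addrA mxxx add0r. Qed.
Lemma mxxK m n (x y : 'M['F_2]_(m,n)) : y + x + x = y.
Proof. by rewrite -addrA mxxx addr0. Qed.
Lemma cardbits s : #|{: bits s}| = (2 ^ s)%N.
Proof. by rewrite card_mx card_Fp // mul1n. Qed.

Definition sgb (T : zmodType) (P : {pred T}) :=
  0 \in P /\ forall x y, x \in P -> y \in P -> x + y \in P.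

Lemma vs_of_sg s (P : {set bits s}) : sgb P ->
  exists W : {vspace bits s}, forall v, (v \in W) = (v \in P).
Proof.
move=> [P0 PD]; exists <<enum P>>%VS => v; apply/idP/idP; last first.
  by move=> vP; apply: memv_span; rewrite mem_enum.
move=> /(coord_span (X := in_tuple (enum P))) ->.
apply: (big_ind (fun x => x \in P)) => //= i _.
have [->|->] := F2c (coord (in_tuple (enum P)) i v).
  by rewrite scale0r.
rewrite scale1r; have : (in_tuple (enum P))`_i \in enum P by apply: mem_nth; rewrite ltn_ord.
by rewrite mem_enum.
Qed.

Lemma card_sg s (P : {set bits s}) (W : {vspace bits s}) :
  (forall v, (v \in W) = (v \in P)) -> #|P| = (2 ^ \dim W)%N.
Proof.
move=> WP; have -> : (2 ^ \dim W)%N = (#|'F_2| ^ \dim W)%N by rewrite card_Fp.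
rewrite -card_vspace; by apply: eq_card => v; rewrite WP.
Qed.

Lemma mx4 m n (a x y z : 'M['F_2]_(m,n)) : a + x + y + (a + z) = x + y + z.
Proof.
apply/matrixP => i j; rewrite !mxE.
by case: (F2c (a i j)) => ->; case: (F2c (x i j)) => ->; case: (F2c (y i j)) => ->;
  case: (F2c (z i j)) => ->; apply/val_inj.
Qed.

Section Bricks.
Variables b s : nat.
Local Notation T := (VV b s).

Definition emb (j : 'I_b) (w : bits s) : T :=
  \matrix_(k, l) (if k == j then w 0 l else 0).

Lemma rowD' (k : 'I_b) (x y : T) : row k (x + y) = row k x + row k y.
Proof. by apply/rowP => l; rewrite !mxE. Qed.

Lemma row_emb k j w : row k (emb j w) = if k == j then w else 0.
Proof.
apply/rowP => l; rewrite !mxE; case: (k == j) => //.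
by rewrite mxE.
Qed.

Lemma embD j u v : emb j (u + v) = emb j u + emb j v.
Proof. by apply/matrixP => k l; rewrite !mxE; case: (k == j); rewrite ?addr0. Qed.

Lemma emb0 j : emb j 0 = 0.
Proof. by apply/matrixP => k l; rewrite !mxE; case: (k == j). Qed.

Lemma emb_inj j : injective (emb j).
Proof. by move=> u v /(congr1 (row j)); rewrite !row_emb eqxx. Qed.

Lemma gam_emb (g : {perm T}) S j w : parallel_with g S -> (forall k, S k 0 = 0) ->
  g (emb j w) = emb j (S j w).
Proof.
move=> Pg S0; apply/row_matrixP => k; rewrite Pg !row_emb.
by case: eqP => [->|].
Qed.


Lemma sum_emb (x : T) : x = \sum_j emb j (row j x).
Proof.
apply/matrixP => i l; rewrite summxE (bigD1 i) //= big1 ?addr0.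
  by rewrite /emb mxE eqxx mxE.
by move=> j /negPf ji; rewrite /emb !mxE eq_sym ji.
Qed.

Definition sg (X : {set T}) := 0 \in X /\ forall x y, x \in X -> y \in X -> x + y \in X.

Lemma sg_sum (X : {set T}) I (r : seq I) (P : pred I) (F : I -> T) :
  sg X -> (forall i, P i -> F i \in X) -> \sum_(i <- r | P i) F i \in X.
Proof. by move=> [X0 XD] FX; apply: (big_ind (fun x => x \in X)). Qed.

End Bricks.

Lemma arith_k k s delta : (delta < s)%N -> (0 < delta.-1)%N -> (k < s - delta.-1)%N -> (k <= s - delta)%N.
Proof. move=> *; lia. Qed.

Section Brick.
Variables b s : nat.
Local Notation T := (VV b s).

Lemma brick_full (g : {perm T}) (S : 'I_b -> {perm bits s}) (delta : nat) (X Z : {set T}) j :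
 (delta < s)%N -> parallel_with g S ->
 (forall j, diff_uniform (S j) (2^delta) /\ strongly_anti_invariant delta.-1 (S j)) ->
 sg X -> sg Z ->
 (forall x, x \in X -> g x \in Z) ->
 (forall z, z \in Z -> exists2 x, x \in X & g x = z) ->
 (forall x y, x \in X -> g (y + x) + g y \in Z) ->
 (exists2 x, x \in X & row j x != 0) ->
 forall w, emb j w \in X /\ emb j w \in Z.
Proof.
move=> ltds Pg HS. move=> [X0 XD]. move=> [Z0 ZD] gX gZ gXZ. move=> [x xX xj0] wf.
have S0 k : S k 0 = 0 by case: (HS k) => _ [_ [? _]].
have [[_ DUle] [/andP [d1 _] _]] := HS j.
have gemb k w : g (emb k w) = emb k (S k w) by apply: gam_emb.
have stc x' w : x' \in X ->
    emb j (S j (w + row j x') + S j w + S j (row j x')) \in Z.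
  move=> x'X.
  have -> : emb j (S j (w + row j x') + S j w + S j (row j x')) =
            g (emb j w + x') + g (emb j w) + g x'.
    apply/row_matrixP => k; rewrite !rowD' !Pg !rowD' !row_emb.
    case: eqP => [->|_]; first by [].
    by rewrite !S0 add0r addr0 mxxx.
  by apply: ZD; [apply: gXZ | apply: gX].
have [w0 t0] : exists w, S j (w + row j x) + S j w + S j (row j x) != 0.
  apply/existsP; apply: contraT; rewrite negb_exists => /forallP H.
  have := DUle (row j x) (S j (row j x)) xj0.
  have -> : ddt (S j) (row j x) (S j (row j x)) = #|{: bits s}|.
    apply: eq_card => w; rewrite inE /=; apply/eqP.
    have := H w; rewrite negbK => /eqP E.
    by rewrite addrC -[S j (row j x)]add0r -E -addrA mxxx addr0.
  by rewrite cardbits leq_exp2l // leqNgt ltds.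
have tZ := stc x w0 xX.
set t := S j (w0 + row j x) + S j w0 + S j (row j x) in t0 tZ.
have invZ u : emb j u \in Z -> emb j (((S j)^-1)%g u) \in X.
  move=> /gZ [x' x'X gx'].
  suff -> : emb j (((S j)^-1)%g u) = x' by [].
  by apply: (@perm_inj _ g); rewrite gemb permKV gx'.
have imX u : emb j u \in X -> emb j (S j u) \in Z.
  by move=> /gX; rewrite gemb.
set a := ((S j)^-1)%g t.
have aX : emb j a \in X := invZ _ tZ.
have a0 : a != 0.
  by apply: contra t0 => /eqP a0; rewrite -[t](permKV (S j)) -/a a0 S0.
have stf w : emb j (S j w + S j (w + a)) \in Z /\ S j w + S j (w + a) != 0.
  split.
    have := ZD _ _ (stc _ w aX) (imX _ aX); rewrite row_emb eqxx -embD.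
    by rewrite mxxK addrC.
  apply: contra a0 => /eqP E.
  have : S j w = S j (w + a).
    by rewrite -[S j (w + a)]add0r -E -addrA mxxx addr0.
  by move/perm_inj/eqP; rewrite -subr_eq0 opprD addrA subrr sub0r oppr_eq0.
set Zj := [set v | emb j v \in Z].
set Xj := [set v | emb j v \in X].
have count : (2 ^ s <= #|Zj :\ (0%R : bits s)| * 2 ^ delta)%N.
  rewrite -sum_nat_const -cardbits -sum1_card.
  rewrite [X in (X <= _)%N](partition_big (fun w => S j w + S j (w + a)) (fun c => c \in Zj :\ (0%R : bits s))); last first.
    by move=> w _; have [H1 H2] := stf w; rewrite !inE H2 H1.
  apply: leq_sum => c cin.
  have -> : \sum_(i | (i \in {: bits s}) && (S j i + S j (i + a) == c)) 1 = ddt (S j) a c.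
    rewrite /ddt -sum1_card; apply: eq_bigl => w; by rewrite !inE.
  exact: DUle.
have sZj : sgb Zj.
  by split; [rewrite inE emb0 | move=> u v; rewrite !inE embD; exact: ZD].
have sXj : sgb Xj.
  by split; [rewrite inE emb0 | move=> u v; rewrite !inE embD; exact: XD].
have [WZ HWZ] := vs_of_sg sZj.
have [WX HWX] := vs_of_sg sXj.
have ZjX u : u \in Zj -> ((S j)^-1)%g u \in Xj by rewrite !inE; exact: invZ.
have XjZ u : u \in Xj -> S j u \in Zj by rewrite !inE; exact: imX.
suff Zfull : forall u, u \in Zj.
  split; last by have := Zfull wf; rewrite inE.
  by have := ZjX _ (Zfull (S j wf)); rewrite permK inE.
have [WZf | WZnf] := eqVneq WZ fullv.
  by move=> u; rewrite -HWZ WZf memvf.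
have WXnf : WX != fullv.
  apply: contra WZnf => /eqP WXf; apply/eqP; apply/vspaceP => u; rewrite memvf HWZ.
  have : ((S j)^-1)%g u \in Xj by rewrite -HWX WXf memvf.
  by move/XjZ; rewrite permKV.
have WZ0 : WZ != 0%VS.
  apply: contra t0 => /eqP E; have : t \in Zj by rewrite inE.
  by rewrite -HWZ E memv0.
have WX0 : WX != 0%VS.
  apply: contra a0 => /eqP E; have : a \in Xj by rewrite inE.
  by rewrite -HWX E memv0.
have img : [set S j x | x in [set y | y \in WX]] = [set y | y \in WZ].
  apply/setP => u; rewrite inE HWZ; apply/imsetP/idP.
    by move=> [x0 x0in ->]; rewrite inE HWX in x0in; exact: XjZ.
  move=> uZ; exists (((S j)^-1)%g u); last by rewrite permKV.
  by rewrite inE HWX; exact: ZjX.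
have [_ [_ SA]] := (HS j).2.
have [eqd dlt] := SA WX WZ WX0 WXnf WZ0 WZnf img.
rewrite eqd in dlt.
have cZ : #|Zj| = (2 ^ \dim WZ)%N by apply: card_sg.
have cZ1 : #|Zj :\ (0%R : bits s)| = (2 ^ \dim WZ - 1)%N.
  by rewrite -cZ (cardsD1 (0%R : bits s) Zj) (_ : (0%R : bits s) \in Zj) ?add1n ?subn1 //; case: sZj.
rewrite cZ1 in count.
have e : (2 ^ (s - delta) * 2 ^ delta = 2 ^ s)%N by rewrite -expnD subnK // ltnW.
have hk : (2 ^ \dim WZ <= 2 ^ (s - delta))%N.
  rewrite leq_exp2l //; exact: arith_k ltds d1 dlt.
have pos : (0 < 2 ^ delta)%N by rewrite expn_gt0.
have posN : (0 < 2 ^ s)%N by rewrite expn_gt0.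
have h2 : ((2 ^ \dim WZ - 1) * 2 ^ delta <= (2 ^ (s - delta) - 1) * 2 ^ delta)%N.
  by rewrite leq_mul2r leq_sub2r // orbT.
have h2' : ((2 ^ (s - delta) - 1) * 2 ^ delta = 2 ^ s - 2 ^ delta)%N by rewrite mulnBl mul1n e.
rewrite h2' in h2.
have h3 := leq_trans count h2.
have : (2 ^ s - 2 ^ delta < 2 ^ s)%N by rewrite ltn_subrL pos posN.
by rewrite ltnNge h3.
Qed.
End Brick.

Section Wall.
Variables b s : nat.
Local Notation T := (VV b s).

Lemma set0_card (X : {set T}) : 0 \in X -> #|X| = 1%N -> X = [set 0].
Proof.
move=> X0 c; apply/eqP; rewrite eq_sym eqEcard cards1 c leqnn andbT.
by rewrite sub1set.
Qed.

Lemma setT_card (X : {set T}) : #|X| = #|[set: T]| -> X = [set: T].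
Proof. by move=> c; apply/eqP; rewrite eqEcard subsetT c leqnn. Qed.

Lemma wall_gam (g : {perm T}) (S : 'I_b -> {perm bits s}) (delta : nat) (X Z : {set T}) :
 (delta < s)%N -> parallel_with g S ->
 (forall j, diff_uniform (S j) (2^delta) /\ strongly_anti_invariant delta.-1 (S j)) ->
 g 0 = 0 -> sg X -> sg Z -> #|X| = #|Z| ->
 (forall x y, x \in X -> g (y + x) + g y \in Z) ->
 X != [set 0] -> X != setT ->
 exists I, is_wall_index I /\ X = wall s I /\ Z = X.
Proof.
move=> ltds Pg HS g0 sX sZ cXZ gXZ Xn0 XnT.
have [X0 XD] := sX; have [Z0 ZD] := sZ.
have gX x : x \in X -> g x \in Z.
  by move=> xX; have := gXZ x 0 xX; rewrite add0r g0 addr0.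
have imXZ : [set g x | x in X] = Z.
  apply/eqP; rewrite eqEcard card_imset; last exact: perm_inj.
  rewrite cXZ leqnn andbT; apply/subsetP => z /imsetP [x xX ->]; exact: gX.
have gZ z : z \in Z -> exists2 x, x \in X & g x = z.
  by rewrite -imXZ => /imsetP [x xX ->]; exists x.
pose I := [set j | [exists x in X, row j x != 0]].
have full j : j \in I -> forall w, emb j w \in X /\ emb j w \in Z.
  rewrite inE => /exists_inP [x xX xj].
  by apply: (brick_full ltds Pg HS sX sZ gX gZ gXZ); exists x.
have XW : X = wall s I.
  apply/setP => x; rewrite /wall inE; apply/idP/forallP.
    move=> xX j; apply/implyP => jnI; apply: contraR jnI => rj.
    by rewrite inE; apply/exists_inP; exists x.
  move=> H; rewrite (sum_emb x); apply: sg_sum => // j _.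
  case: (boolP (j \in I)) => jI; first exact: (full j jI _).1.
  by have /eqP -> := implyP (H j) jI; rewrite emb0.
have XZ : X = Z.
  apply/eqP; rewrite eqEcard cXZ leqnn andbT; apply/subsetP => x xX.
  have := xX; rewrite XW inE => /forallP H.
  rewrite (sum_emb x); apply: sg_sum => // j _.
  case: (boolP (j \in I)) => jI; first exact: (full j jI _).2.
  by have /eqP -> := implyP (H j) jI; rewrite emb0.
exists I; split; last by split.
split.
  have [x xX x0] : exists2 x, x \in X & x != 0.
    apply/exists_inP; apply: contraR Xn0; rewrite negb_exists_in => /forall_inP H.
    apply/eqP/setP => x; rewrite inE; apply/idP/eqP => [xX | ->//].
    by have := H x xX; rewrite negbK => /eqP.
  have [j rj] : exists j, row j x != 0.
    apply/existsP; apply: contraR x0; rewrite negb_exists => /forallP H.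
    apply/eqP/row_matrixP => j; rewrite row0; by have := H j; rewrite negbK => /eqP.
  by apply/set0Pn; exists j; rewrite inE; apply/exists_inP; exists x.
apply: contra XnT => /eqP IT; apply/eqP/setP => x; rewrite XW IT !inE.
by apply/forallP => j; rewrite inE.
Qed.

Definition coset_map (rho : {perm T}) (X Y : {set T}) :=
  forall x y, x \in X -> rho (y + x) + rho y \in Y.

Lemma wall_rho (rho g l : {perm T}) (S : 'I_b -> {perm bits s}) (delta : nat) (X Y : {set T}) :
 (delta < s)%N -> parallel_with g S ->
 (forall j, diff_uniform (S j) (2^delta) /\ strongly_anti_invariant delta.-1 (S j)) ->
 rho = (g * l)%g -> lin_map l -> rho 0 = 0 -> sg X -> sg Y -> #|X| = #|Y| ->
 coset_map rho X Y -> X != [set 0] -> X != setT ->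
 exists I, is_wall_index I /\ X = wall s I /\ Y = [set l x | x in X].
Proof.
move=> ltds Pg HS rgl lin r0 sX sY cXY cm Xn0 XnT.
have l0 : l 0 = 0.
  by have := lin 0 0; rewrite addr0 => H; rewrite {1}H mxxx.
have g0 : g 0 = 0.
  by apply: (@perm_inj _ l); rewrite l0 -permM -rgl.
have [Y0 YD] := sY.
pose Z := [set z | l z \in Y].
have sZ : sg Z.
  split; first by rewrite inE l0.
  by move=> x y; rewrite !inE lin; exact: YD.
have cZ : #|Z| = #|Y|.
  by rewrite -(card_preimset Y (@perm_inj _ l)); apply: eq_card => z; rewrite !inE.
have cmg x y : x \in X -> g (y + x) + g y \in Z.
  by move=> xX; rewrite inE lin -!permM -rgl; exact: cm.
have [I [HI [XW ZX]]] := wall_gam ltds Pg HS g0 sX sZ (etrans cXY (esym cZ)) cmg Xn0 XnT.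
exists I; split => //; split => //.
apply/setP => y; apply/idP/imsetP.
  move=> yY; exists ((l^-1)%g y); last by rewrite permKV.
  by rewrite -ZX inE permKV.
by move=> [x xX ->]; have := xX; rewrite -ZX inE.
Qed.

Definition good (rho : {perm T}) :=
  rho 0 = 0 /\ exists g l : {perm T}, rho = (g * l)%g /\
   (exists delta : nat, (delta < s)%N /\
        exists S : 'I_b -> {perm bits s}, parallel_with g S /\
          forall j, diff_uniform (S j) (2 ^ delta) /\
                    strongly_anti_invariant delta.-1 (S j)) /\
     strongly_proper l.

Lemma WW (rho rho' : {perm T}) (X Y : {set T}) :
  good rho -> good rho' -> sg X -> sg Y -> #|X| = #|Y| ->
  X != [set 0] -> X != setT -> coset_map rho X Y -> coset_map rho' Y X -> False.
Proof.
move=> [r0 [g [l [rgl [[d [ltd [S [Pg HS]]]] [lin nW]]]]]].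
move=> [r0' [g' [l' [rgl' [[d' [ltd' [S' [Pg' HS']]]] [lin' _]]]]]].
move=> sX sY cXY Xn0 XnT cm cm'.
have [I [HI [XW YX]]] := wall_rho ltd Pg HS rgl lin r0 sX sY cXY cm Xn0 XnT.
have Yn0 : Y != [set 0].
  apply: contra Xn0 => /eqP Y0; apply/eqP; apply: set0_card; first by case: sX.
  by rewrite cXY Y0 cards1.
have YnT : Y != setT.
  by apply: contra XnT => /eqP YT; apply/eqP; apply: setT_card; rewrite cXY YT.
have [I' [HI' [YW _]]] := wall_rho ltd' Pg' HS' rgl' lin' r0' sY sX (esym cXY) cm' Yn0 YnT.
apply: nW; exists I, I'; split => //; split => //.
by rewrite -XW -YX.
Qed.

End Wall.

Section Feistel.
Variables b s : nat.
Local Notation T := (VV b s).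

Definition padd (u v : T * T) : T * T := (u.1 + v.1, u.2 + v.2).

Lemma coset_self (U : {set T * T}) v : is_subgroup U -> v \in U ->
  [set (u.1 + v.1, u.2 + v.2) | u in U] = U.
Proof.
move=> [U0 UD] vU; apply/setP => z; apply/imsetP/idP.
  by move=> [u uU ->]; exact: UD.
move=> zU; exists (z.1 + v.1, z.2 + v.2); first exact: UD.
by rewrite /= !mxxK; case: z {zU}.
Qed.

Lemma round_props (rho : {perm T}) (U U' : {set T * T}) :
  rho 0 = 0 -> is_subgroup U -> is_subgroup U' ->
  part_image (lin_partition U) (feistel rho) = lin_partition U' ->
  [set feistel rho u | u in U] = U' /\
  (forall u y, u \in U ->
     padd (feistel rho (padd u y)) (feistel rho y) \in U').
Proof.
move=> r0 sU sU' PE.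
have [U0 UD] := sU; have [U0' UD'] := sU'.
have blk y : exists v, [set feistel rho x | x in [set (u.1 + y.1, u.2 + y.2) | u in U]]
                        = [set (u.1 + v.1, u.2 + v.2) | u in U'].
  have : [set feistel rho x | x in [set (u.1 + y.1, u.2 + y.2) | u in U]] \in lin_partition U'.
    rewrite -PE; apply/imsetP; exists [set (u.1 + y.1, u.2 + y.2) | u in U] => //.
    by apply/imsetP; exists y.
  by move=> /imsetP [v _ ->]; exists v.
have Fy y : feistel rho y \in [set feistel rho x | x in [set (u.1 + y.1, u.2 + y.2) | u in U]].
  apply/imsetP; exists y => //; apply/imsetP; exists (0, 0) => //.
  by rewrite /= !add0r; case: y.
split.
  have [v Ev] := blk (0, 0).
  rewrite (coset_self sU U0) in Ev.
  have := imset_f (feistel rho) U0; rewrite Ev /feistel /= r0 addr0.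
  move=> /imsetP [w wU' [E1 E2]].
  have vw : v = w.
    case: v E1 E2 {Ev} => v1 v2 /= E1 E2.
    by rewrite -[v1](mxKx w.1) -E1 -[v2](mxKx w.2) -E2 !addr0; case: w {wU' E1 E2}.
  by rewrite vw coset_self.
move=> u y uU.
have [v Ev] := blk y.
have := Fy y; rewrite Ev => /imsetP [w wU' Ew].
have : feistel rho (padd u y) \in [set (u.1 + v.1, u.2 + v.2) | u in U'].
  by rewrite -Ev; apply/imsetP; exists (padd u y) => //; apply/imsetP; exists u.
move=> /imsetP [w' wU'' Ew'].
rewrite Ew Ew' /padd /=.
have -> : w'.1 + v.1 + (w.1 + v.1) = w'.1 + w.1.
  by rewrite addrACA mxxx addr0.
have -> : w'.2 + v.2 + (w.2 + v.2) = w'.2 + w.2.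
  by rewrite addrACA mxxx addr0.
exact: UD'.
Qed.
End Feistel.

Section Rounds.
Variables b s : nat.
Local Notation T := (VV b s).

Lemma DU0 (rho : {perm T}) (c : T) : good rho -> c != 0 ->
  (forall y, rho (y + c) + rho y + rho c = 0) -> False.
Proof.
move=> [r0 [g [l [rgl [[d [ltd [S [Pg HS]]]] [lin _]]]]]] c0 H.
have l0 : l 0 = 0 by have := lin 0 0; rewrite addr0 => E; rewrite {1}E mxxx.
have Hg y : g (y + c) + g y + g c = 0.
  apply: (@perm_inj _ l); rewrite l0 !lin -!permM -rgl; exact: H.
have [j cj] : exists j, row j c != 0.
  apply/existsP; apply: contraR c0; rewrite negb_exists => /forallP H'.
  apply/eqP/row_matrixP => j; rewrite row0; by have := H' j; rewrite negbK => /eqP.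
have S0 k : S k 0 = 0 by case: (HS k) => _ [_ [? _]].
have [[_ DUle] _] := HS j.
have := DUle (row j c) (S j (row j c)) cj.
have -> : ddt (S j) (row j c) (S j (row j c)) = #|{: bits s}|.
  apply: eq_card => w; rewrite !inE /=; apply/eqP.
  have := congr1 (row j) (Hg (emb j w)).
  rewrite !rowD' !Pg rowD' row_emb eqxx row0 => E.
  by rewrite -[RHS]add0r -E mxxK addrC.
by rewrite cardbits leq_exp2l // leqNgt ltd.
Qed.

Definition Bset (U : {set T * T}) : {set T} := [set u.2 | u in U].
Definition Cset (U : {set T * T}) : {set T} := [set c | (c, 0) \in U].

Lemma sg_A (U : {set T * T}) : is_subgroup U -> sg (Aset U).
Proof.
move=> [U0 UD]; split; first by rewrite inE; apply/existsP; exists 0.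
move=> x y; rewrite !inE => /existsP [c1 H1] /existsP [c2 H2].
by apply/existsP; exists (c1 + c2); exact: (UD _ _ H1 H2).
Qed.
Lemma sg_D (U : {set T * T}) : is_subgroup U -> sg (Dset U).
Proof.
move=> [U0 UD]; split; first by rewrite inE.
move=> x y; rewrite !inE => H1 H2; have := UD _ _ H1 H2; by rewrite /= addr0.
Qed.
Lemma sg_B (U : {set T * T}) : is_subgroup U -> sg (Bset U).
Proof.
move=> [U0 UD]; split; first by apply/imsetP; exists (0,0).
move=> x y /imsetP [u uU ->] /imsetP [v vU ->].
by apply/imsetP; exists (u.1 + v.1, u.2 + v.2) => //; exact: UD.
Qed.
Lemma sg_C (U : {set T * T}) : is_subgroup U -> sg (Cset U).
Proof.
move=> [U0 UD]; split; first by rewrite inE.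
move=> x y; rewrite !inE => H1 H2; have := UD _ _ H1 H2; by rewrite /= addr0.
Qed.

Definition rnd (rho : {perm T}) (U U' : {set T * T}) :=
  [/\ rho 0 = 0, is_subgroup U, is_subgroup U', [set feistel rho u | u in U] = U' &
   forall u y, u \in U -> padd (feistel rho (padd u y)) (feistel rho y) \in U'].

Variables (rho : {perm T}) (U U' : {set T * T}).
Hypothesis R : rnd rho U U'.

Lemma FinU u : u \in U -> feistel rho u \in U'.
Proof.
have [r0 sU sU' FU CP2] := R. by move=> uU; rewrite -FU; apply: imset_f. Qed.

Lemma A_B : Aset U' = Bset U.
Proof.
have [r0 sU sU' FU CP2] := R.
apply/setP => a; rewrite inE; apply/existsP/imsetP.
  by move=> [c]; rewrite -FU => /imsetP [u uU [-> _]]; exists u.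
move=> [u uU ->]; exists (u.1 + rho u.2); exact: (FinU uU).
Qed.

Lemma D_C : Dset U' = Cset U.
Proof.
have [r0 sU sU' FU CP2] := R.
apply/setP => d; rewrite !inE; apply/idP/idP.
  rewrite -FU => /imsetP [u uU [E1 E2]].
  suff -> : (d, 0) = u by [].
  by case: u uU E1 E2 => u1 u2 /= _ E1 E2; rewrite E2 -E1 r0 addr0.
move=> H; have := FinU H; by rewrite /feistel /= r0 addr0.
Qed.

Lemma CP bb y : bb \in Bset U -> rho (y + bb) + rho y + rho bb \in Dset U'.
Proof.
have [r0 sU sU' FU CP2] := R.
move=> /imsetP [u uU ->]; rewrite inE.
have H1 := CP2 u (0, y) uU.
have H2 := FinU uU.
have [_ UD'] := sU'.
have := UD' _ _ H1 H2.
rewrite /padd /feistel /= !addr0 !add0r.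
by rewrite mx4 mxxK mxxx (addrC u.2 y).
Qed.

End Rounds.

Section Conds.
Variables b s : nat.
Local Notation T := (VV b s).

Lemma rnd_of (rho : {perm T}) (U U' : {set T * T}) : rho 0 = 0 -> is_subgroup U -> is_subgroup U' ->
  part_image (lin_partition U) (feistel rho) = lin_partition U' -> rnd rho U U'.
Proof. by move=> r0 sU sU' E; have [H1 H2] := round_props r0 sU sU' E; split. Qed.

Notation rFinU := FinU.
Notation rA_B := A_B.
Notation rD_C := D_C.
Notation rCP := CP.


Lemma cm_card (rho : {perm T}) X Y : rho 0 = 0 -> coset_map rho X Y -> (#|X| <= #|Y|)%N.
Proof.
move=> r0 cm; rewrite -(card_imset X (@perm_inj _ rho)); apply: subset_leq_card.
apply/subsetP => z /imsetP [x xX ->]; have := cm x 0 xX; by rewrite add0r r0 addr0.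
Qed.

Lemma nz_elt (U : {set T * T}) : is_subgroup U -> U != [set (0, 0)] ->
  exists2 u, u \in U & u != (0, 0).
Proof.
move=> [U0 _] Un0; apply/exists_inP; apply: contraR Un0; rewrite negb_exists_in => /forall_inP H.
apply/eqP/setP => u; rewrite inE; apply/idP/eqP => [uU | ->//].
by have := H u uU; rewrite negbK => /eqP.
Qed.

Lemma cond3 (rho : {perm T}) (U U' : {set T * T}) : good rho -> rnd rho U U' -> U != [set (0, 0)] ->
  Dset U' = [set 0] -> False.
Proof.
move=> G R Un0 D0; have [r0 sU _ _ _] := R.
have [u uU un0] := nz_elt sU Un0.
case: (eqVneq u.2 0) => [u20 | u2n0].
  have := rFinU R uU; rewrite /feistel u20 r0 addr0 => H.
  have : u.1 \in Dset U' by rewrite inE.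
  rewrite D0 inE => /eqP u10; move: un0; by case: u u10 u20 {uU H} => /= ? ? -> ->; rewrite eqxx.
apply: (DU0 G u2n0) => y.
have : rho (y + u.2) + rho y + rho u.2 \in Dset U'.
  by apply: (rCP R); apply: imset_f.
by rewrite D0 inE => /eqP.
Qed.

Lemma R1 (rho rho' : {perm T}) (U U' : {set T * T}) : rnd rho U U' -> rnd rho' U' U ->
  coset_map rho (Bset U) (Aset U).
Proof.
move=> R R' x y xB.
have [r0 sU sU' _ _] := R.
have [A0 AD] := sg_A sU.
have H1 := rCP R y xB.
rewrite (rD_C R) in H1.
have CA : Cset U \subset Aset U.
  by apply/subsetP => c; rewrite !inE => H; apply/existsP; exists 0.
have H1' := subsetP CA _ H1.
have rA : rho x \in Aset U.
  move: xB => /imsetP [u uU ->].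
  have := rFinU R uU; rewrite /feistel => H.
  have H2 : u.1 + rho u.2 \in Aset U.
    by rewrite (rA_B R'); apply/imsetP; exists (u.2, u.1 + rho u.2).
  have H3 : u.1 \in Aset U by rewrite inE; apply/existsP; exists u.2; case: u uU {H H2}.
  by have := AD _ _ H3 H2; rewrite mxKx.
by have := AD _ _ H1' rA; rewrite mxxK.
Qed.

Lemma R2 (rho rho' : {perm T}) (U U' : {set T * T}) : rnd rho U U' -> rnd rho' U' U ->
  Bset U = setT -> coset_map rho (Dset U) (Cset U).
Proof.
move=> R R' BT x y xD.
have [r0 sU sU' _ _] := R.
have [C0 CD] := sg_C sU.
have H1 := rCP R y (_ : x \in Bset U); rewrite BT inE in H1; have {}H1 := H1 isT.
rewrite (rD_C R) in H1.
have rC : rho x \in Cset U.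
  rewrite -(rD_C R) inE.
  have x0U : (0, x) \in U by rewrite inE in xD.
  have H2 := rFinU R x0U; rewrite /feistel /= add0r in H2.
  have H3 : (x, 0) \in U'.
    have : x \in Cset U' by rewrite -(rD_C R').
    by rewrite inE.
  have [_ UD'] := sU'.
  by have := UD' _ _ H3 H2; rewrite /= mxxx add0r.
by have := CD _ _ H1 rC; rewrite mxxK.
Qed.

End Conds.

Section Main.
Variables b s : nat.
Local Notation T := (VV b s).

Lemma in_U_sub (U : {set T * T}) u : u \in U -> u.1 \in Aset U /\ u.2 \in Bset U.
Proof.
move=> uU; split; last exact: imset_f.
by rewrite inE; apply/existsP; exists u.2; case: u uU.
Qed.

Lemma cond1 (rho rho' : {perm T}) (U U' : {set T * T}) :
  good rho -> good rho' -> rnd rho U U' -> rnd rho' U' U -> proper_nontrivial U -> False.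
Proof.
move=> G G' R R' [Un0 UnT].
have [r0 sU sU' _ _] := R.
have [r0' _ _ _ _] := R'.
have cmBA := R1 R R'.
have cmAB := R1 R' R.
rewrite -(A_B R') (A_B R) in cmAB.
have cBA := cm_card r0 cmBA; have cAB := cm_card r0' cmAB.
have cEq : #|Bset U| = #|Aset U| by apply/eqP; rewrite eqn_leq cBA cAB.
case: (eqVneq (Bset U) [set 0]) => [B0 | Bn0].
  have A0 : Aset U = [set 0].
    apply: set0_card; first by case: (sg_A sU).
    by rewrite -cEq B0 cards1.
  apply/(negP Un0)/eqP/setP => u; rewrite inE; apply/idP/eqP => [uU | ->]; last by case: sU.
  have [H1 H2] := in_U_sub uU; rewrite A0 B0 !inE in H1 H2.
  by case: u {uU} H1 H2 => u1 u2 /= /eqP -> /eqP ->.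
case: (eqVneq (Bset U) setT) => [BT | BnT]; last first.
  exact: (WW G G' (sg_B sU) (sg_A sU) cEq Bn0 BnT cmBA cmAB).
have AT : Aset U = setT by apply: setT_card; rewrite -cEq BT.
have cmDC := R2 R R' BT.
have cmCD := R2 R' R (etrans (esym (A_B R')) AT).
rewrite (D_C R) -(D_C R') in cmCD.
have cDC := cm_card r0 cmDC; have cCD := cm_card r0' cmCD.
have cEq2 : #|Dset U| = #|Cset U| by apply/eqP; rewrite eqn_leq cDC cCD.
case: (eqVneq (Dset U) [set 0]) => [D0 | Dn0].
  have C0 : Cset U = [set 0].
    apply: set0_card; first by case: (sg_C sU).
    by rewrite -cEq2 D0 cards1.
  apply: (cond3 G R Un0); by rewrite (D_C R).
case: (eqVneq (Dset U) setT) => [DT | DnT]; last first.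
  exact: (WW G G' (sg_D sU) (sg_C sU) cEq2 Dn0 DnT cmDC cmCD).
apply/(negP UnT)/eqP/setP => [[p q]]; rewrite !inE.
have : p \in Aset U by rewrite AT inE.
rewrite inE => /existsP [c pc].
have : q + c \in Dset U by rewrite DT inE.
rewrite inE => qc.
have [_ UD] := sU.
by have := UD _ _ pc qc; rewrite /= addr0 addrC mxxK.
Qed.

Lemma prodB (U : {set T * T}) : is_subgroup U -> U = setX (Aset U) (Dset U) -> Bset U = Dset U.
Proof.
move=> [U0 _] PU; apply/setP => d; apply/imsetP/idP.
  by move=> [[u1 u2] uU ->]; move: uU; rewrite {1}PU in_setX => /andP [].
by rewrite inE => H; exists (0, d).
Qed.

Lemma prodC (U : {set T * T}) : is_subgroup U -> U = setX (Aset U) (Dset U) -> Cset U = Aset U.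
Proof.
move=> [U0 _] PU; apply/setP => a; rewrite !inE; apply/idP/existsP.
  by move=> H; exists 0.
move=> [c H]; rewrite PU in_setX; move: U0; rewrite {1}PU in_setX => /andP [_ ->].
by rewrite andbT inE; apply/existsP; exists c.
Qed.

Lemma R3 (rho : {perm T}) (U U' : {set T * T}) : rnd rho U U' ->
  U' = setX (Aset U') (Dset U') -> coset_map rho (Dset U) (Dset U').
Proof.
move=> R PU' x y xD.
have [r0 sU sU' _ _] := R.
have [D0 DD] := sg_D sU'.
have x0U : (0, x) \in U by rewrite inE in xD.
have xB : x \in Bset U by apply/imsetP; exists (0, x).
have H1 := CP R y xB.
have H2 := FinU R x0U; rewrite {1}PU' /feistel /= add0r in_setX in H2.
have /andP [_ H3] := H2.
by have := DD _ _ H1 H3; rewrite mxxK.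
Qed.

Lemma cond2 (rho rho' : {perm T}) (U1 U2 U3 : {set T * T}) :
  good rho -> good rho' -> rnd rho U1 U2 -> rnd rho' U2 U3 ->
  U1 = setX (Aset U1) (Dset U1) -> U2 = setX (Aset U2) (Dset U2) ->
  U3 = setX (Aset U3) (Dset U3) -> proper_nontrivial U1 -> False.
Proof.
move=> G G' R1 R2 P1 P2 P3 [Un0 UnT].
have [r0 sU1 sU2 _ _] := R1.
have [r0' _ sU3 _ _] := R2.
have cm1 := R3 R1 P2.
have cm2 := R3 R2 P3.
have E3 : Dset U3 = Dset U1.
  by rewrite (D_C R2) (prodC sU2 P2) (A_B R1) (prodB sU1 P1).
have E2 : Dset U2 = Aset U1 by rewrite (D_C R1) (prodC sU1 P1).
rewrite E3 in cm2.
have c1 := cm_card r0 cm1; have c2 := cm_card r0' cm2.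
have cEq : #|Dset U1| = #|Dset U2| by apply/eqP; rewrite eqn_leq c1 c2.
case: (eqVneq (Dset U1) [set 0]) => [D0 | Dn0].
  have A0 : Aset U1 = [set 0].
    rewrite -E2; apply: set0_card; first by case: (sg_D sU2).
    by rewrite -cEq D0 cards1.
  apply/(negP Un0)/eqP/setP => [[u1 u2]]; rewrite {1}P1 in_setX A0 D0 !inE.
  by rewrite xpair_eqE.
case: (eqVneq (Dset U1) setT) => [DT | DnT]; last first.
  exact: (WW G G' (sg_D sU1) (sg_D sU2) cEq Dn0 DnT cm1 cm2).
have AT : Aset U1 = setT by rewrite -E2; apply: setT_card; rewrite -cEq DT.
apply/(negP UnT)/eqP/setP => [[u1 u2]]; by rewrite {1}P1 in_setX AT DT !inE.
Qed.

End Main.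

Unset Implicit Arguments. Set Strict Implicit.

Theorem theorem4p10 (b s r : nat)
  (rho gam lam : nat -> {perm VV b s})
  (U : nat -> {set VV b s * VV b s}) :
  (2 <= r)%N ->
  (forall i, (1 <= i <= r)%N ->
     rho i 0 = 0 /\ rho i = (gam i * lam i)%g /\
     (exists delta : nat, (delta < s)%N /\
        exists S : 'I_b -> {perm bits s}, parallel_with (gam i) S /\
          forall j, diff_uniform (S j) (2 ^ delta) /\
                    strongly_anti_invariant delta.-1 (S j)) /\
     strongly_proper (lam i)) ->
  (forall i, (1 <= i <= r.+1)%N -> is_subgroup (U i) /\ proper_nontrivial (U i)) ->
  (forall i, (1 <= i <= r)%N ->
     part_image (lin_partition (U i)) (feistel (rho i)) = lin_partition (U i.+1)) ->
  ~ [\/ (exists i, (1 <= i <= r.-1)%N /\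
          part_image (lin_partition (U i.+1)) (feistel (rho i.+1)) = lin_partition (U i)),
        (exists i, (1 <= i <= r.-1)%N /\
          U i = setX (Aset (U i)) (Dset (U i)) /\
          U i.+1 = setX (Aset (U i.+1)) (Dset (U i.+1)) /\
          U i.+2 = setX (Aset (U i.+2)) (Dset (U i.+2))),
        (exists i, (1 <= i <= r)%N /\ Dset (U i) = [set 0] /\ Dset (U i.+1) = [set 0])
      | (exists i, (1 <= i <= r)%N /\ Aset (U i) = [set 0] /\ Aset (U i.+1) = [set 0])].
Proof.
move=> r2 Hrho HU Hpart.
have G i : (1 <= i <= r)%N -> good (rho i).
  move=> /Hrho [r0 [rgl [dl sp]]]; split; first exact: r0.
  by exists (gam i), (lam i).
have Rn i : (1 <= i <= r)%N -> rnd (rho i) (U i) (U i.+1).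
  move=> ir; have [r0 _] := Hrho i ir.
  have /andP [i1 ir'] := ir.
  have a1 : (1 <= i <= r.+1)%N by move: ir; clear; lia.
  have a2 : (1 <= i.+1 <= r.+1)%N by move: ir; clear; lia.
  exact: (rnd_of r0 (HU i a1).1 (HU i.+1 a2).1 (Hpart i ir)).
case=> [[i [ir E]] | [i [ir [P1 [P2 P3]]]] | [i [ir [D1 D2]]] | [i [ir [A1 A2]]]].
- have ir1 : (1 <= i <= r)%N by move: ir r2; clear; lia.
  have ir2 : (1 <= i.+1 <= r)%N by move: ir r2; clear; lia.
  have [r0' _] := Hrho i.+1 ir2.
  have a1 : (1 <= i <= r.+1)%N by move: ir r2; clear; lia.
  have a2 : (1 <= i.+1 <= r.+1)%N by move: ir r2; clear; lia.
  exact: (cond1 (G i ir1) (G i.+1 ir2) (Rn i ir1) (rnd_of r0' (HU i.+1 a2).1 (HU i a1).1 E) (HU i a1).2).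
- have ir1 : (1 <= i <= r)%N by move: ir r2; clear; lia.
  have ir2 : (1 <= i.+1 <= r)%N by move: ir r2; clear; lia.
  have a1 : (1 <= i <= r.+1)%N by move: ir r2; clear; lia.
  exact: (cond2 (G i ir1) (G i.+1 ir2) (Rn i ir1) (Rn i.+1 ir2) P1 P2 P3 (HU i a1).2).
- have a1 : (1 <= i <= r.+1)%N by move: ir r2; clear; lia.
  exact: (cond3 (G i ir) (Rn i ir) (HU i a1).2.1 D2).
- have a1 : (1 <= i <= r.+1)%N by move: ir r2; clear; lia.
  have [[U0 _] [Un0 _]] := HU i a1.
  apply/(negP Un0)/eqP/setP => u; rewrite inE; apply/idP/eqP => [uU | ->//].
  have [H1 _] := in_U_sub uU.
  have [H2 _] := in_U_sub (FinU (Rn i ir) uU).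
  rewrite A1 inE in H1; rewrite A2 inE /= in H2.
  by case: u {uU} H1 H2 => u1 u2 /= /eqP -> /eqP ->.
Qed.
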